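(* Let $K\ge 2$ and let $g(\mathbf{x})=\sum_{j=1}^K \pi_j\,\phi(\mathbf{x};\boldsymbol{\mu}_j,\Sigma_j)$, $\mathbf{x}\in\mathbb{R}^D$, be a mixture of $D$-variate normal densities with $\pi_j\in[0,1]$, $\sum_j\pi_j=1$ and positive definite $\Sigma_j$. Fix $\boldsymbol{\alpha}\in\mathcal{S}_K$ and let $\mathbf{w}\in\mathbf{W}$ (defined below). Then along the line $\{\mathbf{x}^*(\boldsymbol{\alpha})+\delta\mathbf{w}:\delta\in\mathbb{R}\}$ the function $g$ attains its maximum value at $\delta=0$.
   Context: $\phi(\mathbf{x};\boldsymbol{\mu},\Sigma)$ is the normal density with mean $\boldsymbol{\mu}$ and covariance $\Sigma$. $\mathcal{S}_K=\{\boldsymbol{\alpha}\in\mathbb{R}^K:\alpha_i\in[0,1],\sum_i\alpha_i=1\}$. The ridgeline function is $\mathbf{x}^*(\boldsymbol{\alpha})=S_{\boldsymbol{\alpha}}^{-1}\sum_{j=1}^K\alpha_j\Sigma_j^{-1}\boldsymbol{\mu}_j$, where $S_{\boldsymbol{\alpha}}=\sum_{j=1}^K\alpha_j\Sigma_j^{-1}$. Set $\mathbf{v}_j=\Sigma_j^{-1}(\mathbf{x}^*(\boldsymbol{\alpha})-\boldsymbol{\mu}_j)$ for $j=1,\dots,K$, and $\mathbf{d}_j=S_{\boldsymbol{\alpha}}^{-1}(\mathbf{v}_j-\mathbf{v}_K)$ for $j=1,\dots,K-1$ (the derivative vectors of $\mathbf{x}^*$ with respect to $\alpha_1,\dots,\alpha_{K-1}$).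 Define $\mathbf{W}=\{\mathbf{w}\in\mathbb{R}^D:\mathbf{w}'S_{\boldsymbol{\alpha}}\mathbf{d}_j=0\text{ for all }j=1,\dots,K-1\}$. *)

(* Defs.v *)
From HB Require Import structures.
From mathcomp Require Import all_boot all_order all_algebra.
From mathcomp Require Import all_classical all_reals all_analysis.
Set Implicit Arguments. Unset Strict Implicit. Unset Printing Implicit Defensive.
Import Order.TTheory GRing.Theory Num.Theory.
Local Open Scope ring_scope.

Section Defs.
Variable R : realType.

Definition sc (A : 'M[R]_1) : R := A ord0 ord0.

Definition posdef (D : nat) (S : 'M[R]_D) : Prop :=
  S^T = S /\ forall x : 'cV[R]_D, x != 0 -> 0 < sc (x^T *m S *m x).

Definition normal_pdf (D : nat) (x mu : 'cV[R]_D) (S : 'M[R]_D) : R :=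
  (Num.sqrt ((2 * pi) ^+ D * \det S))^-1 *
  expR (- (sc ((x - mu)^T *m invmx S *m (x - mu))) / 2).

Definition mixture (D K : nat) (p : 'I_K -> R) (mu : 'I_K -> 'cV[R]_D)
  (S : 'I_K -> 'M[R]_D) (x : 'cV[R]_D) : R :=
  \sum_(j < K) p j * normal_pdf x (mu j) (S j).

Definition simplex (K : nat) (a : 'I_K -> R) : Prop :=
  (forall j, 0 <= a j <= 1) /\ \sum_(j < K) a j = 1.

Definition S_alpha (D K : nat) (S : 'I_K -> 'M[R]_D) (a : 'I_K -> R) : 'M[R]_D :=
  \sum_(j < K) a j *: invmx (S j).

Definition ridgeline (D K : nat) (mu : 'I_K -> 'cV[R]_D) (S : 'I_K -> 'M[R]_D)
  (a : 'I_K -> R) : 'cV[R]_D :=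
  invmx (S_alpha S a) *m \sum_(j < K) (a j *: (invmx (S j) *m mu j)).

Definition vvec (D K : nat) (mu : 'I_K -> 'cV[R]_D) (S : 'I_K -> 'M[R]_D)
  (a : 'I_K -> R) (j : 'I_K) : 'cV[R]_D :=
  invmx (S j) *m (ridgeline mu S a - mu j).

(* d_j = S_alpha^{-1} (v_j - v_K); here k plays the role of the last index K *)
Definition dvec (D K : nat) (mu : 'I_K -> 'cV[R]_D) (S : 'I_K -> 'M[R]_D)
  (a : 'I_K -> R) (j k : 'I_K) : 'cV[R]_D :=
  invmx (S_alpha S a) *m (vvec mu S a j - vvec mu S a k).

(* w in W: w' S_alpha d_j = 0 for all j = 1..K-1
   (0-based: j < K-1, and the last index k has value K-1) *)
Definition inW (D K : nat) (mu : 'I_K -> 'cV[R]_D) (S : 'I_K -> 'M[R]_D)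
  (a : 'I_K -> R) (w : 'cV[R]_D) : Prop :=
  forall j k : 'I_K, (k : nat) = K.-1 -> (j < K.-1)%N ->
    sc (w^T *m S_alpha S a *m dvec mu S a j k) = 0.

End Defs.

(* Main.v *)
Require Import Defs.
From HB Require Import structures.
From mathcomp Require Import all_boot all_order all_algebra.
From mathcomp Require Import all_classical all_reals all_analysis.
From mathcomp Require Import ring lra zify.
Import Order.TTheory GRing.Theory Num.Theory.
Local Open Scope ring_scope.
Set Implicit Arguments. Unset Strict Implicit.

Section Aux.
Variable R : realType.

Lemma scD (A B : 'M[R]_1) : sc (A + B) = sc A + sc B.
Proof. by rewrite /sc mxE. Qed.
Lemma scZ (c : R) (A : 'M[R]_1) : sc (c *: A) = c * sc A.
Proof. by rewrite /sc mxE. Qed.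
Lemma scN (A : 'M[R]_1) : sc (- A) = - sc A.
Proof. by rewrite /sc mxE. Qed.
Lemma scT (A : 'M[R]_1) : sc A^T = sc A.
Proof. by rewrite /sc mxE. Qed.
Lemma sc_sum (I : finType) (F : I -> 'M[R]_1) : sc (\sum_i F i) = \sum_i sc (F i).
Proof. by rewrite /sc summxE. Qed.

Lemma unit_of_pos n (A : 'M[R]_n) :
  (forall x : 'cV[R]_n, x != 0 -> 0 < sc (x^T *m A *m x)) -> A \in unitmx.
Proof.
move=> H; apply/negPn/negP => nu.
have : kermx A != 0 by rewrite kermx_eq0 row_free_unit.
case/rowV0Pn => v /sub_kermxP vA v0.
have := H v^T; rewrite trmx_eq0 trmxK => /(_ v0).
by rewrite vA mul0mx /sc mxE ltxx.
Qed.

Lemma posdef_unit n (S : 'M[R]_n) : posdef S -> S \in unitmx.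
Proof. by case=> _ H; apply: unit_of_pos. Qed.

Lemma inv_pos n (S : 'M[R]_n) (x : 'cV[R]_n) : posdef S -> x != 0 ->
  0 < sc (x^T *m invmx S *m x).
Proof.
move=> hS x0; have Su := posdef_unit hS.
set z := invmx S *m x.
have ex : x = S *m z by rewrite /z mulKVmx.
have z0 : z != 0 by apply: contraNneq x0 => ez; rewrite ex ez mulmx0.
rewrite -mulmxA -/z {1}ex trmx_mul hS.1 -mulmxA mulmxA.
exact: hS.2.
Qed.

Lemma inv_psd n (S : 'M[R]_n) (x : 'cV[R]_n) : posdef S ->
  0 <= sc (x^T *m invmx S *m x).
Proof.
move=> hS; have [->|x0] := eqVneq x 0; first by rewrite mulmx0 /sc mxE.
exact/ltW/inv_pos.
Qed.

End Aux.

Theorem theorem2 (R : realType) (D K : nat) (hK : (2 <= K)%N)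
  (p : 'I_K -> R) (mu : 'I_K -> 'cV[R]_D) (S : 'I_K -> 'M[R]_D)
  (hp : forall j, 0 <= p j <= 1) (hp1 : \sum_(j < K) p j = 1)
  (hS : forall j, posdef (S j))
  (a : 'I_K -> R) (ha : simplex a)
  (w : 'cV[R]_D) (hw : inW mu S a w) :
  forall delta : R,
    mixture p mu S (ridgeline mu S a + delta *: w)
    <= mixture p mu S (ridgeline mu S a).
Proof.
move=> delta.
case: ha => ha01 ha1.
have ha0 j : 0 <= a j by case/andP: (ha01 j).
set xs := ridgeline mu S a.
set Sa := S_alpha S a.
have Sau : Sa \in unitmx.
  apply: unit_of_pos => x x0.
  rewrite /Sa /S_alpha mulmx_sumr mulmx_suml sc_sum.
  have q0 j : 0 < sc (x^T *m invmx (S j) *m x) by exact: inv_pos.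
  have E j : sc (x^T *m (a j *: invmx (S j)) *m x) = a j * sc (x^T *m invmx (S j) *m x).
    by rewrite -scalemxAr -scalemxAl scZ.
  under eq_bigr do rewrite E.
  rewrite lt_def sumr_ge0 ?andbT; last by move=> j _; rewrite mulr_ge0 // ltW.
  apply/eqP => /psumr_eq0P H.
  have {}H := H (fun j _ => mulr_ge0 (ha0 j) (ltW (q0 j))).
  have : \sum_(j < K) a j = 0.
    apply: big1 => j _; have := H j isT.
    by move/eqP; rewrite mulf_eq0 (gt_eqF (q0 j)) orbF => /eqP.
  by rewrite ha1 => /eqP; rewrite oner_eq0.
have sumv : \sum_(j < K) a j *: vvec mu S a j = 0.
  rewrite /vvec; under eq_bigr do rewrite mulmxBr scalerBr.
  rewrite sumrB; apply/eqP; rewrite subr_eq0; apply/eqP.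
  under eq_bigr do rewrite scalemxAl.
  by rewrite -mulmx_suml -/Sa /xs /ridgeline -/Sa mulKVmx.

have K0 : (K.-1 < K)%N by rewrite prednK // (ltn_trans _ hK).
pose k : 'I_K := Ordinal K0.
set c := fun j => sc (w^T *m vvec mu S a j).
have ck j : c j = c k.
  have [jk|] := ltnP j K.-1.
    have := hw j k erefl jk.
    rewrite /dvec -/Sa -mulmxA (mulmxA Sa) mulmxV // mul1mx mulmxBr.
    by rewrite scD scN /c => /eqP; rewrite subr_eq0 => /eqP.
  move=> jK; have -> // : j = k.
  by apply: val_inj => /=; move: (ltn_ord j) jK hK; move: (nat_of_ord j) => m; lia.
have c0 : c k = 0.
  have : sc (w^T *m \sum_(j < K) a j *: vvec mu S a j) = c k.
    rewrite mulmx_sumr sc_sum.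
    under eq_bigr do rewrite -scalemxAr scZ -/(c _) ck.
    by rewrite -mulr_suml ha1 mul1r.
  by rewrite sumv mulmx0 /sc mxE => <-.
have cj j : c j = 0 by rewrite ck.
rewrite /mixture; apply: ler_sum => j _.
apply: ler_wpM2l; first by case/andP: (hp j).
rewrite /normal_pdf; apply: ler_wpM2l; first by rewrite invr_ge0 sqrtr_ge0.
rewrite ler_expR.
set M := invmx (S j).
set y := xs - mu j.
have -> : xs + delta *: w - mu j = y + delta *: w by rewrite addrAC.
have Msym : M^T = M by rewrite /M trmx_inv (hS j).1.
have E1 : sc (w^T *m M *m y) = 0 by rewrite -mulmxA; exact: cj.
have E2 : sc (y^T *m M *m w) = 0.
  by rewrite -scT !trmx_mul trmxK Msym mulmxA E1.
have E3 := inv_psd w (hS j).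
rewrite -/M in E3.
have E : sc ((y + delta *: w)^T *m M *m (y + delta *: w)) =
  sc (y^T *m M *m y) + delta * sc (w^T *m M *m y) + delta * sc (y^T *m M *m w)
  + delta ^+ 2 * sc (w^T *m M *m w).
  have tZ : (delta *: w)^T = delta *: w^T by apply/matrixP => r s; rewrite !mxE.
  rewrite linearD linearZ /= [(y + _)^T]linearD /= tZ !mulmxDl -!scalemxAl !scD !scZ.
  by rewrite scD scZ mulrDr mulrA addrA -expr2.
rewrite E E1 E2.
have : 0 <= delta ^+ 2 * sc (w^T *m M *m w) by rewrite mulr_ge0 // sqr_ge0.
move: (delta ^+ 2 * _) (sc (y^T *m M *m y)) => Q A hQ.
rewrite !mulr0 !addr0 ler_pM2r ?invr_gt0 ?ltr0n // lerN2 lerDl //.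
Qed.
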